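(* Let $p,q\ge2$ be natural numbers. Then the UHF-algebra $M_{q^\infty}$ contains elements $x_2,x_3,\dots,x_p$ such that $\|x_i\|\le1$, $x_ix_j=0$ for $i\neq j$, and $x_i^*x_j=\delta_{i,j}\,x_2^*x_2$ for all $i,j\in\{2,\dots,p\}$, and such that $x_2^*x_2$ has $\frac1p$ Lebesgue spectral measure, i.e. $\tau(f(x_2^*x_2))=\frac1p\int_0^1f(t)\,dt$ for all $f\in C_0(0,1]$, where $\tau$ is the unique tracial state of $M_{q^\infty}$.
   Context: $M_{q^\infty}$ is the UHF-algebra given as the inductive limit of $M_{q^n}\to M_{q^{n+1}}$, $x\mapsto1_q\otimes x$. *)

(* Defs.v *)
From HB Require Import structures.
From mathcomp Require Import all_boot all_order all_algebra.
From mathcomp Require Import complex mxtens.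
From mathcomp Require Import all_classical all_reals all_analysis.

Set Implicit Arguments.
Unset Strict Implicit.
Unset Printing Implicit Defensive.

Import Order.TTheory GRing.Theory Num.Theory.
Local Open Scope ring_scope.
Local Open Scope complex_scope.

(* The n-th building block is M_{q^n}(C) with C := R[i]; the connecting map   *)
(* M_{q^n} -> M_{q^(n+1)} is x |-> 1_q (x) x (Kronecker product).             *)
(* M_{q^oo} is the C*-completion of the algebraic inductive limit; we         *)
(* represent its elements by sequences (x_n)_n, x_n in M_{q^n}, that are      *)
(* Cauchy in operator norm along the connecting maps; every element of        *)
(* M_{q^oo} is such a limit, two sequences represent the same element iff     *)
(* their difference tends to 0 in norm, and the algebra operations (product,  *)
(* adjoint, linear combinations) are computed termwise.                       *)

Section UHF.
Variables (R : realType) (q : nat).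
Local Notation C := (R[i]).

Definition blk (n : nat) := 'M[C]_(q ^ n).

Definition adjmx m n (A : 'M[C]_(m, n)) : 'M[C]_(n, m) :=
  (map_mx (fun z : C => conjc z) A)^T.

Definition uhf_step (n : nat) (x : blk n) : blk n.+1 :=
  castmx (esym (expnS q n), esym (expnS q n)) ((1%:M : 'M[C]_q) *t x).

Fixpoint uhf_emb (n k : nat) : blk n -> blk (k + n) :=
  match k return blk n -> blk (k + n) with
  | 0 => fun x => x
  | k'.+1 => fun x => uhf_step (@uhf_emb n k' x)
  end.

Definition vnorm2 m (v : 'cV[C]_m) : C := \sum_(i < m) `|v i 0| ^+ 2.

Definition opnorm_le m (A : 'M[C]_m) (r : R) : Prop :=
  forall v : 'cV[C]_m, vnorm2 (A *m v) <= (r ^+ 2)%:C * vnorm2 v.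

Definition uhf_seq := forall n : nat, blk n.

Definition uhf_cauchy (x : uhf_seq) : Prop :=
  forall eps : R, 0 < eps -> exists N : nat, forall n k : nat, (N <= n)%N ->
    opnorm_le (@uhf_emb n k (x n) - x (k + n)%N) eps.

Definition uhf_null (x : uhf_seq) : Prop :=
  forall eps : R, 0 < eps -> exists N : nat, forall n : nat, (N <= n)%N ->
    opnorm_le (x n) eps.

(* ||x|| <= r in M_{q^oo} (||x|| = lim_n ||x_n||) *)
Definition uhf_norm_le (x : uhf_seq) (r : R) : Prop :=
  forall eps : R, 0 < eps -> exists N : nat, forall n : nat, (N <= n)%N ->
    opnorm_le (x n) (r + eps).

Definition uhf_mul (x y : uhf_seq) : uhf_seq := fun n => x n *m y n.
Definition uhf_adj (x : uhf_seq) : uhf_seq := fun n => adjmx (x n).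
Definition uhf_sub (x y : uhf_seq) : uhf_seq := fun n => x n - y n.
Definition uhf_scale (c : C) (x : uhf_seq) : uhf_seq := fun n => c *: x n.

(* normalized trace on M_{q^n}; tau = lim_n of it is the unique tracial state *)
Definition ntr (n : nat) (A : blk n) : C := \tr A / (q ^ n)%:R.

Definition mxpow m (A : 'M[C]_m) (k : nat) : 'M[C]_m := iter k (mulmx A) 1%:M.

Definition poly_mx (P : {poly R}) m (A : 'M[C]_m) : 'M[C]_m :=
  \sum_(i < size P) (P`_i)%:C *: mxpow A i.

(* tau(f(a)) = c, for a positive element a of norm <= 1 (spectrum in [0,1])  *)
(* and f continuous on [0,1] with f(0) = 0: by continuity of the functional   *)
(* calculus, f(a) = lim_k P_k(a) for every sequence of polynomials P_k with   *)
(* P_k(0) = 0 converging uniformly to f on [0,1]; and                          *)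
(* tau(P_k(a)) = lim_n ntr (P_k(a_n)).                                         *)
Definition tau_fcalc_is (f : R -> R) (a : uhf_seq) (c : C) : Prop :=
  forall P : nat -> {poly R},
    (forall k, (P k).[0] = 0) ->
    (forall eps : R, 0 < eps -> exists K : nat, forall k : nat, (K <= k)%N ->
        forall t : R, 0 <= t <= 1 -> `|f t - (P k).[t]| <= eps) ->
    forall eps : R, 0 < eps -> exists K : nat, forall k : nat, (K <= k)%N ->
      exists N : nat, forall n : nat, (N <= n)%N ->
        `|ntr (poly_mx (P k) (a n)) - c| <= eps%:C.

End UHF.

(* Main.v *)
Require Import Defs.
From HB Require Import structures.
From mathcomp Require Import all_boot all_order all_algebra.
From mathcomp Require Import complex mxtens.
From mathcomp Require Import all_classical all_reals all_analysis.
From mathcomp Require Import zify ring lra.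
Import Order.TTheory GRing.Theory Num.Theory.
Import numFieldNormedType.Exports.
Set Implicit Arguments.
Unset Strict Implicit.
Unset Printing Implicit Defensive.

Local Open Scope ring_scope.
Local Open Scope classical_set_scope.
Section Ana.
Variable R : realType.
Implicit Types (x y t : R).

Lemma powdiff x y i : 0 <= x <= 1 -> 0 <= y <= 1 ->
  `|x ^+ i - y ^+ i| <= i%:R * `|x - y|.
Proof.
move=> /andP [x0 x1] /andP [y0 y1]; elim: i => [|i IH].
  by rewrite !expr0 subrr normr0 mul0r.
have e : x ^+ i.+1 - y ^+ i.+1 = x * (x ^+ i - y ^+ i) + (x - y) * y ^+ i.
  by rewrite !exprS; ring.
rewrite e; apply: le_trans (ler_normD _ _) _.
rewrite !normrM (ger0_norm x0) (ger0_norm (exprn_ge0 _ y0)).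
have hy : y ^+ i <= 1 by rewrite exprn_ile1.
have hn : 0 <= `|x ^+ i - y ^+ i| by [].
have hd : 0 <= `|x - y| by [].
rewrite -natr1 mulrDl mul1r; apply: lerD.
  by apply: le_trans IH; rewrite -[X in _ <= X]mul1r ler_wpM2r.
by rewrite -[X in _ <= X]mulr1 ler_wpM2l.
Qed.

Definition lipc (P : {poly R}) := \sum_(i < size P) `|P`_i| * i%:R.

Lemma poly_lip (P : {poly R}) x y : 0 <= x <= 1 -> 0 <= y <= 1 ->
  `|P.[x] - P.[y]| <= lipc P * `|x - y|.
Proof.
move=> hx hy; rewrite !horner_coef -sumrB /lipc mulr_suml.
apply: le_trans (ler_norm_sum _ _ _) _; apply: ler_sum => i _.
rewrite -mulrBr normrM -mulrA ler_wpM2l //.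
exact: powdiff.
Qed.

Definition bndc (P : {poly R}) := \sum_(i < size P) `|P`_i|.

Lemma poly_bnd (P : {poly R}) t : 0 <= t <= 1 -> `|P.[t]| <= bndc P.
Proof.
move=> /andP [t0 t1]; rewrite horner_coef /bndc.
apply: le_trans (ler_norm_sum _ _ _) _; apply: ler_sum => i _.
rewrite normrM -[X in _ <= X]mulr1 ler_wpM2l // normrX ger0_norm //.
by rewrite exprn_ile1.
Qed.

Definition approx (f : R -> R) := forall eps : R, 0 < eps ->
  exists P : {poly R}, forall t, 0 <= t <= 1 -> `|f t - P.[t]| <= eps.

Lemma unif_cont f : approx f -> forall e : R, 0 < e -> exists2 d : R, 0 < d &
  forall x y, 0 <= x <= 1 -> 0 <= y <= 1 -> `|x - y| <= d -> `|f x - f y| <= e.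
Proof.
move=> hf e he.
have he3 : 0 < e / 3 by rewrite divr_gt0.
have [P hP] := hf _ he3.
have hC : 0 <= lipc P by rewrite sumr_ge0 // => i _; rewrite mulr_ge0.
exists (e / 3 / (lipc P + 1)); first by rewrite divr_gt0 // ltr_wpDl.
move=> x y hx hy hxy.
have e1 : f x - f y = (f x - P.[x]) + (P.[x] - P.[y]) - (f y - P.[y]) by ring.
rewrite e1; apply: le_trans (ler_normB _ _) _.
apply: le_trans (lerD (ler_normD _ _) (hP _ hy)) _.
have h2 : `|P.[x] - P.[y]| <= e / 3.
  apply: le_trans (poly_lip P hx hy) _.
  apply: le_trans (ler_wpM2l hC hxy) _.
  rewrite mulrA ler_pdivrMr ?ltr_wpDl // mulrC ler_wpM2l ?ltW //.
  by rewrite ltrDl.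
have := hP _ hx; lra.
Qed.

Lemma approx_bnd f : approx f -> exists B : R, forall t, 0 <= t <= 1 -> `|f t| <= B.
Proof.
move=> hf; have [P hP] := hf _ ltr01.
exists (bndc P + 1) => t ht.
have e1 : f t = (f t - P.[t]) + P.[t] by ring.
rewrite e1; apply: le_trans (ler_normD _ _) _.
have := hP _ ht; have := poly_bnd P ht; lra.
Qed.

Notation mu := (@lebesgue_measure R).

Lemma mu_itvoc (a b : R) : a < b -> mu `]a, b] = (b - a)%:E.
Proof. by move=> ab; rewrite lebesgue_measure_itv /= lte_fin ab. Qed.

Lemma cont_int01 (f : R -> R) : {within `[0, 1], continuous f} ->
  mu.-integrable `[0, 1] (EFin \o f).
Proof. by move=> h; apply: continuous_compact_integrable => //; exact: segment_compact. Qed.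

Lemma cst_cont01 (c : R) : {within `[0, 1], continuous (fun _ : R => c)}.
Proof. by apply: continuous_subspaceT => x; exact: cvg_cst. Qed.

Lemma int_sub (f : R -> R) (A : set R) : {within `[0, 1], continuous f} ->
  measurable A -> A `<=` `[0, 1] -> mu.-integrable A (EFin \o f).
Proof. by move=> hf mA sA; apply: integrableS (cont_int01 hf). Qed.

Lemma G_diff (f : R -> R) (a b : R) : {within `[0, 1], continuous f} ->
  0 <= a -> a <= b -> b <= 1 ->
  \int[mu]_(t in `[0, b]) f t - \int[mu]_(t in `[0, a]) f t = \int[mu]_(t in `]a, b]) f t.
Proof.
move=> hf a0 ab b1.
rewrite (@Rintegral_itvB _ f (BLeft 0) (BRight b) a) //.
- apply: int_sub => //; apply: subset_itvl; by rewrite bnd_simp.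
Qed.

Lemma abs_bnd (I x d e : R) : I <= x * d + e * d -> x * d - e * d <= I ->
  `|I - x * d| <= e * d.
Proof. by move=> h1 h2; rewrite ler_norml; apply/andP; split; lra. Qed.

Lemma piece (f : R -> R) (a b e : R) : {within `[0, 1], continuous f} ->
  0 <= a -> a < b -> b <= 1 -> (forall t, a < t <= b -> `|f t - f b| <= e) ->
  `|\int[mu]_(t in `]a, b]) f t - f b * (b - a)| <= e * (b - a).
Proof.
move=> hf a0 ab b1 hb.
have sub : `]a, b] `<=` `[0, 1].
  by apply: subset_itv; rewrite bnd_simp // ltW.
have mA : measurable (`]a, b] : set R) by [].
have intf := int_sub hf mA sub.
have intc : forall c : R, mu.-integrable `]a, b] (EFin \o (fun _ : R => c)).
  by move=> c; apply: int_sub => //; exact: cst_cont01.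
have hm : fine (mu `]a, b]) = b - a by rewrite mu_itvoc.
have h1 : \int[mu]_(t in `]a, b]) f t <= \int[mu]_(t in `]a, b]) (f b + e).
  apply: le_Rintegral => // t; rewrite /= in_itv /= => ht.
  by have := hb t ht; rewrite ler_norml; case/andP => _; lra.
have h2 : \int[mu]_(t in `]a, b]) (f b - e) <= \int[mu]_(t in `]a, b]) f t.
  apply: le_Rintegral => // t; rewrite /= in_itv /= => ht.
  by have := hb t ht; rewrite ler_norml; case/andP => h _; lra.
have c1 : forall c : R, \int[mu]_(t in `]a, b]) c = c * (b - a) by move=> c; rewrite Rintegral_cst // hm.
rewrite !c1 in h1 h2.
rewrite mulrDl in h1; rewrite mulrBl in h2.
exact: abs_bnd.
Qed.


Lemma inv_le_of' (L e : R) : 0 < e -> e^-1 <= L -> L^-1 <= e.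
Proof.
move=> he hL; have hL0 : 0 < L by apply: lt_le_trans hL; rewrite invr_gt0.
by rewrite -(invrK e) lef_pV2 ?posrE ?invr_gt0.
Qed.

Lemma riemann (f : R -> R) : {within `[0, 1], continuous f} -> approx f ->
  forall e : R, 0 < e -> exists L0 : nat, forall L : nat, (L0 <= L)%N -> (0 < L)%N ->
  `|(\sum_(a < L) f (1 - (a : nat)%:R / L%:R)) / L%:R - \int[mu]_(t in `[0, 1]) f t| <= e.
Proof.
move=> hf ha e he.
have [d hd hU] := unif_cont ha he.
have hdi : 0 < d^-1 by rewrite invr_gt0.
have hb := archi_boundP (ltW hdi).
exists (Num.Def.archi_bound d^-1) => L hL L0.
have rL : 0 < (L%:R : R) by rewrite ltr0n.
have hh : (L%:R : R)^-1 <= d.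
  by apply: inv_le_of' => //; apply: (le_trans (ltW hb)); rewrite ler_nat.
have e1 : \sum_(a < L) f (1 - (a : nat)%:R / L%:R) = \sum_(m < L) f (m.+1%:R / L%:R).
  rewrite (reindex_inj rev_ord_inj) /=; apply: eq_bigr => m _; congr f.
  rewrite natrB ?ltn_ord //; field; by rewrite gt_eqF.
pose G := fun x : R => \int[mu]_(t in `[0, x]) f t.
have G0 : G 0 = 0 by rewrite /G set_itv1 Rintegral_set1.
have e2 : \int[mu]_(t in `[0, 1]) f t =
    \sum_(m < L) \int[mu]_(t in `]((m : nat)%:R / L%:R), (m.+1%:R / L%:R)]) f t.
  have := telescope_sumr (fun m : nat => G (m%:R / L%:R)) (leq0n L).
  rewrite divff ?gt_eqF // mul0r G0 subr0 big_mkord /G => <-.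
  apply: eq_bigr => m _; apply: G_diff => //.
  - by rewrite ler_pM2r ?invr_gt0 // ler_nat.
  - by rewrite ler_pdivrMr // mul1r ler_nat ltn_ord.
rewrite e1 e2 mulr_suml -sumrB.
apply: le_trans (ler_norm_sum _ _ _) _.
have hsum : \sum_(m < L) e * (L%:R : R)^-1 = e.
  by rewrite sumr_const card_ord -mulr_natr; field; rewrite gt_eqF.
rewrite -[X in _ <= X]hsum; apply: ler_sum => m _.
set a := ((m : nat)%:R / L%:R : R); set b := (m.+1%:R / L%:R : R).
have hba : b - a = (L%:R)^-1 by rewrite /a /b -mulrBl -natrB // subSnn mul1r.
have a0 : 0 <= a by rewrite divr_ge0 // ltW.
have ab : a < b by rewrite -subr_gt0 hba invr_gt0.
have b1 : b <= 1 by rewrite /b ler_pdivrMr // mul1r ler_nat ltn_ord.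
have := @piece f a b e hf a0 ab b1.
rewrite hba distrC => h; apply: h => t /andP [hat htb].
apply: hU.
- by rewrite (le_trans a0 (ltW hat)) (le_trans htb b1).
- by rewrite (le_trans a0 (ltW ab)) b1.
apply: le_trans hh; rewrite -hba ler_norml; apply/andP; split; lra.
Qed.

End Ana.

Local Close Scope classical_set_scope.
Local Close Scope ring_scope.

Section Comb.
Variables (q p : nat).
Hypotheses (hq : (2 <= q)%N) (hp : (2 <= p)%N).

Definition LL n := (q ^ n %/ p)%N.

Fixpoint pos (n i x : nat) : nat :=
  match n with
  | 0 => 0
  | n'.+1 => if (x < q * LL n')%N then (q * pos n' i (x %/ q) + x %% q)%N
             else ((p - 1) * (q * LL n') + x + (i - 1) * (LL n'.+1 - q * LL n'))%N
  end.

Fixpoint rev (n k : nat) : nat :=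
  match n with
  | 0 => 0
  | n'.+1 => ((k %% q) * q ^ n' + rev n' (k %/ q))%N
  end.

Definition posk n i x := rev n (pos n i x).

Lemma q_gt0 : (0 < q)%N. Proof. by apply: leq_trans hq. Qed.
Lemma p_gt0 : (0 < p)%N. Proof. by apply: leq_trans hp. Qed.

Lemma LL_mono n : (q * LL n <= LL n.+1)%N.
Proof.
rewrite /LL leq_divRL ?p_gt0 // expnS -mulnA leq_mul2l.
by rewrite leq_trunc_div orbT.
Qed.

Lemma LL_mono_k n k : (q ^ k * LL n <= LL (k + n))%N.
Proof.
elim: k => [|k IH]; first by rewrite expn0 mul1n.
rewrite expnS -mulnA addSn; apply: leq_trans (LL_mono _).
by rewrite leq_mul2l IH orbT.
Qed.

Lemma pLL n : (p * LL n <= q ^ n)%N.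
Proof. by rewrite mulnC leq_trunc_div. Qed.

Lemma LL_upper n : (q ^ n < p * (LL n).+1)%N.
Proof.
rewrite {1}(divn_eq (q ^ n) p) /LL mulnS mulnC addnC ltn_add2r.
by rewrite ltn_pmod ?p_gt0.
Qed.

Lemma LL0 : LL 0 = 0.
Proof. by rewrite /LL expn0 divn_small. Qed.

Lemma pos_lt n i x : (1 <= i <= p)%N -> (x < LL n)%N -> (pos n i x < p * LL n)%N.
Proof.
move=> /andP[i1 ip]; elim: n x => [|n IH] x; first by rewrite LL0.
move=> xL /=; have qL := LL_mono n; have q0 := q_gt0.
case: ifP => hx.
  have h1 : (x %/ q < LL n)%N by rewrite ltn_divLR // mulnC.
  have h2 := IH _ h1.
  have h3 : (x %% q < q)%N by rewrite ltn_mod.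
  have h4 : (q * pos n i (x %/ q) + x %% q < q * (pos n i (x %/ q)).+1)%N.
    by rewrite mulnS addnC ltn_add2r.
  apply: (leq_trans h4); apply: (@leq_trans (q * (p * LL n))); first by rewrite leq_mul2l h2 orbT.
  by rewrite mulnCA leq_mul2l qL orbT.
have h5 : ((i - 1) * (LL n.+1 - q * LL n) <= (p - 1) * (LL n.+1 - q * LL n))%N.
  by rewrite leq_mul2r; apply/orP; right; lia.
move: hx => /negbT; rewrite -leqNgt => hx.
set G := (LL n.+1 - q * LL n)%N in h5 *.
have hG : LL n.+1 = (q * LL n + G)%N by rewrite /G; lia.
rewrite hG in xL *.
have e : ((p - 1) * G + G = p * G)%N.
  by rewrite -{2}(mul1n G) -mulnDl subnK // ltnW.
have e2 : ((p - 1) * (q * LL n) + q * LL n = p * (q * LL n))%N.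
  by rewrite -{2}(mul1n (q * LL n)) -mulnDl subnK // ltnW.
rewrite mulnDr; lia.
Qed.

Lemma divmod_inj (d a a' c c' : nat) : (c < d)%N -> (c' < d)%N ->
  (d * a + c = d * a' + c')%N -> a = a' /\ c = c'.
Proof.
move=> cd c'd e.
have d0 : (0 < d)%N by apply: leq_ltn_trans cd.
have := congr1 (fun z => z %/ d)%N e; have := congr1 (fun z => z %% d)%N e.
rewrite ![(d * _)%N]mulnC !modnMDl !divnMDl // !modn_small // !divn_small //.
by rewrite !addn0 => -> ->.
Qed.

Lemma pos_inj n i i' x x' : (1 <= i <= p)%N -> (1 <= i' <= p)%N ->
  (x < LL n)%N -> (x' < LL n)%N -> pos n i x = pos n i' x' -> i = i' /\ x = x'.
Proof.
move=> hi hi'; elim: n x x' => [|n IH] x x'; first by rewrite LL0.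
move=> xL x'L /=; have qL := LL_mono n; have q0 := q_gt0.
have hm : forall y, (y < q * LL n)%N -> (q * pos n i (y %/ q) + y %% q < p * (q * LL n))%N
   /\ (q * pos n i' (y %/ q) + y %% q < p * (q * LL n))%N.
  move=> y yL.
  have h1 : (y %/ q < LL n)%N by rewrite ltn_divLR // mulnC.
  have h3 : (y %% q < q)%N by rewrite ltn_mod.
  split.
    have h2 := pos_lt hi h1.
    have h4 : (q * pos n i (y %/ q) + y %% q < q * (pos n i (y %/ q)).+1)%N.
      by rewrite mulnS addnC ltn_add2r.
    by apply: (leq_trans h4); rewrite mulnCA leq_mul2l h2 orbT.
  have h2 := pos_lt hi' h1.
  have h4 : (q * pos n i' (y %/ q) + y %% q < q * (pos n i' (y %/ q)).+1)%N.
    by rewrite mulnS addnC ltn_add2r.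
  by apply: (leq_trans h4); rewrite mulnCA leq_mul2l h2 orbT.
have e2 : ((p - 1) * (q * LL n) + q * LL n = p * (q * LL n))%N.
  by rewrite -{2}(mul1n (q * LL n)) -mulnDl subnK // ltnW.
set G := (LL n.+1 - q * LL n)%N.
case: ifP => hx; case: ifP => hx'.
- move=> /divmod_inj [] //; try by rewrite ltn_mod.
  move=> /IH [] //; try by rewrite ltn_divLR // mulnC.
  by move=> -> e1 e3; split=> //; rewrite (divn_eq x q) (divn_eq x' q) e1 e3.
- move: (hm _ hx) => [h _]; move: hx' => /negbT; rewrite -leqNgt.
  move: h e2; generalize ((p - 1) * (q * LL n))%N (p * (q * LL n))%N ((i' - 1) * G)%N; lia.
- move: (hm _ hx') => [_ h]; move: hx => /negbT; rewrite -leqNgt.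
  move: h e2; generalize ((p - 1) * (q * LL n))%N (p * (q * LL n))%N ((i - 1) * G)%N; lia.
move: hx hx' => /negbT; rewrite -leqNgt => hx /negbT; rewrite -leqNgt => hx'.
move=> e.
have : ((i - 1) * G + (x - q * LL n) = (i' - 1) * G + (x' - q * LL n))%N by lia.
rewrite ![((_ - 1) * G)%N]mulnC.
move=> /divmod_inj [] //; try by rewrite /G; lia.
Qed.

Lemma rev_lt n k : (rev n k < q ^ n)%N.
Proof.
elim: n k => [|n IH] k /=; first by rewrite expn0.
have h : (k %% q < q)%N by rewrite ltn_mod q_gt0.
apply: (@leq_trans ((k %% q).+1 * q ^ n)).
  by rewrite mulSn addnC ltn_add2r.
by rewrite expnS leq_mul2r h orbT.
Qed.

Lemma rev_inj n k k' : (k < q ^ n)%N -> (k' < q ^ n)%N -> rev n k = rev n k' -> k = k'.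
Proof.
elim: n k k' => [|n IH] k k'.
  by rewrite expn0 !ltnS !leqn0 => /eqP -> /eqP ->.
move=> kq k'q /=; rewrite ![(_ * q ^ n)%N]mulnC => /divmod_inj [] //; try exact: rev_lt.
have q0 := q_gt0.
move=> e1 /IH e2; rewrite (divn_eq k q) (divn_eq k' q) e1 e2 //.
  by rewrite ltn_divLR // -expnSr.
by rewrite ltn_divLR // -expnSr.
Qed.

Lemma rev_step n r c : (c < q)%N -> rev n.+1 (q * r + c) = (c * q ^ n + rev n r)%N.
Proof.
move=> cq /=; rewrite [(q * r)%N]mulnC modnMDl divnMDl ?q_gt0 // modn_small // divn_small //.
by rewrite addn0.
Qed.

Lemma posk_lt n i x : (posk n i x < q ^ n)%N.
Proof. exact: rev_lt. Qed.

Lemma posk_inj n i i' x x' : (1 <= i <= p)%N -> (1 <= i' <= p)%N ->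
  (x < LL n)%N -> (x' < LL n)%N -> posk n i x = posk n i' x' -> i = i' /\ x = x'.
Proof.
move=> hi hi' hx hx' /rev_inj e; apply: (pos_inj hi hi' hx hx'); apply: e.
  exact: leq_trans (pos_lt hi hx) (pLL n).
exact: leq_trans (pos_lt hi' hx') (pLL n).
Qed.

Lemma posk_step n i j c : (j < LL n)%N -> (c < q)%N ->
  posk n.+1 i (q * j + c) = (c * q ^ n + posk n i j)%N.
Proof.
move=> jL cq; rewrite /posk.
have -> : pos n.+1 i (q * j + c) = (q * pos n i j + c)%N.
  rewrite /=.
  have -> : (q * j + c < q * LL n)%N.
    apply: (@leq_trans (q * j.+1)); first by rewrite mulnS addnC ltn_add2r.
    by rewrite leq_mul2l jL orbT.
  by rewrite [(q * j)%N]mulnC modnMDl divnMDl ?q_gt0 // modn_small // divn_small // addn0.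
exact: rev_step.
Qed.

Variable R : realType.
Local Open Scope ring_scope.
Local Open Scope complex_scope.
Local Notation C := (R[i]).

Lemma one_ip : (1 <= 1 <= p)%N.
Proof. by rewrite leqnn (ltnW hp). Qed.

Lemma sum_unique (T : nmodType) N (F : 'I_N -> T) (m0 : 'I_N) :
  (forall m, F m != 0 -> m = m0) -> \sum_m F m = F m0.
Proof.
move=> H; rewrite (bigD1 m0) //= big1 ?addr0 // => m /eqP hm.
by case: (eqVneq (F m) 0) => // /H.
Qed.

Lemma normcR (x : R) : `|x%:C| = `|x|%:C.
Proof. by rewrite normc_def /= expr0n /= addr0 sqrtr_sqr. Qed.

Definition Xg n i (w : nat -> C) : 'M[C]_(q ^ n) :=
  \matrix_(k, l) \sum_(j < LL n)
     (if ((k : nat) == posk n i j) && ((l : nat) == posk n 1 j) then w j else 0).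

Lemma Xg_nz n i w (k l : 'I_(q ^ n)) : Xg n i w k l != 0 ->
  exists2 j, (j < LL n)%N & (k : nat) = posk n i j /\ (l : nat) = posk n 1 j.
Proof.
rewrite mxE => H.
case: (boolP [exists j : 'I_(LL n), ((k : nat) == posk n i j) && ((l : nat) == posk n 1 j)]).
  by move=> /existsP [j /andP [/eqP e1 /eqP e2]]; exists j.
move=> /existsPn hn; move: H; rewrite big1 ?eqxx // => j _.
by rewrite (negbTE (hn j)).
Qed.

Lemma Xg_at n i w j (k l : 'I_(q ^ n)) : (1 <= i <= p)%N -> (j < LL n)%N ->
  (k : nat) = posk n i j -> (l : nat) = posk n 1 j -> Xg n i w k l = w j.
Proof.
move=> hi jL ek el; rewrite mxE (sum_unique (m0 := Ordinal jL)) /=.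
  by rewrite ek el !eqxx.
move=> m; case: ifP => [/andP [/eqP e1 _] _ | _]; last by rewrite eqxx.
apply: val_inj => /=.
by have [] := posk_inj hi hi (ltn_ord m) jL (etrans (esym e1) ek).
Qed.

Lemma Xg_sub n i w1 w2 : Xg n i w1 - Xg n i w2 = Xg n i (fun x => w1 x - w2 x).
Proof.
apply/matrixP => k l; rewrite !mxE -sumrB; apply: eq_bigr => j _.
by case: ifP; rewrite ?subr0.
Qed.

Lemma sqr_norm_ge0 (z : C) : 0 <= `|z| ^+ 2.
Proof. by rewrite exprn_ge0. Qed.

Lemma opnorm_mono N (M : 'M[C]_N) (e : R) :
  (forall k l l', M k l != 0 -> M k l' != 0 -> l = l') ->
  (forall k k' l, M k l != 0 -> M k' l != 0 -> k = k') ->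
  (forall k l, `|M k l| ^+ 2 <= (e ^+ 2)%:C) -> opnorm_le M e.
Proof.
move=> hr hc hb v; rewrite /vnorm2.
have step1 : forall k, `|(M *m v) k 0| ^+ 2 = \sum_l `|M k l| ^+ 2 * `|v l 0| ^+ 2.
  move=> k; rewrite mxE.
  case: (pselect (exists l, M k l != 0)) => [[l0 hl0]|hn].
    rewrite (sum_unique (m0 := l0)); last first.
      by move=> m; rewrite mulf_eq0 negb_or => /andP [/hr h _]; apply: h.
    rewrite (sum_unique (m0 := l0)); last first.
      move=> m; apply: contraNeq => hm.
      have -> : M k m = 0.
        by apply/eqP; apply: contraT => h; case/eqP: hm; apply: hr h hl0.
      by rewrite normr0 expr0n /= mul0r.
    by rewrite normrM exprMn.
  have h0 : forall l, M k l = 0.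
    by move=> l; apply/eqP; apply: contraT => h; case: hn; exists l.
  rewrite big1; last by move=> l _; rewrite h0 mul0r.
  by rewrite big1 ?normr0 ?expr0n // => l _; rewrite h0 normr0 expr0n /= mul0r.
rewrite (eq_bigr _ (fun k _ => step1 k)) exchange_big /= mulr_sumr.
apply: ler_sum => l _; rewrite -mulr_suml mulrC [X in _ <= X]mulrC.
apply: ler_wpM2l; first exact: sqr_norm_ge0.
case: (pselect (exists k, M k l != 0)) => [[k0 hk0]|hn].
  rewrite (sum_unique (m0 := k0)) //.
  move=> m; apply: contraNeq => hm.
  have -> : M m l = 0.
    by apply/eqP; apply: contraT => h; case/eqP: hm; apply: hc h hk0.
  by rewrite normr0 expr0n.
have h0 : forall k, M k l = 0.
  by move=> k; apply/eqP; apply: contraT => h; case: hn; exists k.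
rewrite big1; last by move=> k _; rewrite h0 normr0 expr0n.
by rewrite ler0c sqr_ge0.
Qed.

Lemma opnorm_Xg n i w (e : R) : (1 <= i <= p)%N ->
  (forall j, (j < LL n)%N -> `|w j| ^+ 2 <= (e ^+ 2)%:C) -> opnorm_le (Xg n i w) e.
Proof.
move=> hi hw; apply: opnorm_mono.
- move=> k l l' /Xg_nz [j jL [e1 e2]] /Xg_nz [j' j'L [e3 e4]]; apply: val_inj => /=.
  by have [_ ej] := posk_inj hi hi jL j'L (etrans (esym e1) e3); rewrite e2 e4 ej.
- move=> k k' l /Xg_nz [j jL [e1 e2]] /Xg_nz [j' j'L [e3 e4]]; apply: val_inj => /=.
  have [_ ej] := posk_inj one_ip one_ip jL j'L (etrans (esym e2) e4).
  by rewrite e1 e3 ej.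
move=> k l; case: (eqVneq (Xg n i w k l) 0) => [->|].
  by rewrite normr0 expr0n /= ler0c sqr_ge0.
by move=> /Xg_nz [j jL [e1 e2]]; rewrite (Xg_at _ hi jL e1 e2); apply: hw.
Qed.

Lemma one_i2 j : (2 <= j <= p)%N -> (1 <= j <= p)%N.
Proof. by move=> /andP [h1 h2]; rewrite h2 ltnW. Qed.

Lemma Xg_mul0 n i j w w' : (1 <= i <= p)%N -> (2 <= j <= p)%N ->
  Xg n i w *m Xg n j w' = 0.
Proof.
move=> hi hj; apply/matrixP => k l; rewrite !mxE big1 // => m _.
case: (eqVneq (Xg n i w k m) 0) => [->|/Xg_nz [a aL [_ e2]]]; first by rewrite mul0r.
case: (eqVneq (Xg n j w' m l) 0) => [->|/Xg_nz [b bL [e3 _]]]; first by rewrite mulr0.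
have [ej _] := posk_inj one_ip (one_i2 hj) aL bL (etrans (esym e2) e3).
by move: hj; rewrite -ej.
Qed.

Definition Dg n (w : nat -> C) : 'M[C]_(q ^ n) :=
  \matrix_(k, l) (((k == l)%:R : C) * \sum_(a < LL n)
      (if (k : nat) == posk n 1 a then conjc (w a) * w a else 0)).

Lemma adjmxE m n (A : 'M[C]_(m, n)) k l : adjmx A k l = conjc (A l k).
Proof. by rewrite !mxE. Qed.

Lemma conjc_eq0' (z : C) : (conjc z == 0) = (z == 0).
Proof. exact: conjc_eq0. Qed.

Lemma Xg_adj_mul n i j w : (1 <= i <= p)%N -> (1 <= j <= p)%N ->
  adjmx (Xg n i w) *m Xg n j w = ((i == j)%:R : C) *: Dg n w.
Proof.
move=> hi hj; apply/matrixP => k l; rewrite !mxE.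
under eq_bigr => m _ do rewrite adjmxE.
case: (pselect (exists2 a, (a < LL n)%N & (k : nat) = posk n 1 a)) => [[a aL ek] | hn].
  have hm0 := posk_lt n i a.
  rewrite (sum_unique (m0 := Ordinal hm0)); last first.
    move=> m; rewrite mulf_eq0 negb_or conjc_eq0' => /andP [/Xg_nz [b bL [e1 e2]] _].
    have [_ eb] := posk_inj one_ip one_ip bL aL (etrans (esym e2) ek).
    by apply: val_inj; rewrite /= e1 eb.
  rewrite (@Xg_at n i w a (Ordinal hm0) k hi aL erefl ek).
  rewrite (sum_unique (m0 := Ordinal aL)) /=; last first.
    move=> b; case: ifP => [/eqP e _|]; last by rewrite eqxx.
    apply: val_inj => /=.
    by have [] := posk_inj one_ip one_ip (ltn_ord b) aL (etrans (esym e) ek).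
  rewrite ek eqxx.
  case: (eqVneq i j) => [eij|nij].
    rewrite -eij mul1r.
    case: (eqVneq k l) => [<-|nkl].
      by rewrite ?eqxx /= ?mul1r (@Xg_at n i w a (Ordinal hm0) k hi aL erefl ek).
    rewrite ?(negbTE nkl) /= ?mul0r.
    case: (eqVneq (Xg n i w (Ordinal hm0) l) 0) => [->|/Xg_nz [b bL [e1 e2]]]; first by rewrite mulr0.
    have [_ eb] := posk_inj hi hi aL bL e1.
    by case/eqP: nkl; apply: val_inj; rewrite /= ek e2 eb.
  rewrite mul0r.
  case: (eqVneq (Xg n j w (Ordinal hm0) l) 0) => [->|/Xg_nz [b bL [e1 e2]]]; first by rewrite mulr0.
  have [eij _] := posk_inj hi hj aL bL e1.
  by case/eqP: nij.
rewrite big1; last first.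
  move=> m _; case: (eqVneq (Xg n i w m k) 0) => [->|/Xg_nz [b bL [e1 e2]]].
    by rewrite conjc0 mul0r.
  by case: hn; exists b.
rewrite big1 ?mulr0 // => b _; case: ifP => // /eqP e.
by case: hn; exists b.
Qed.

Definition wup n (w : nat -> C) x := if (x < q * LL n)%N then w (x %/ q)%N else 0.

Lemma uhf_stepE n (M : 'M[C]_(q ^ n)) (k l : 'I_(q ^ n.+1)) (k' l' : 'I_(q ^ n)) :
  (k' : nat) = (k %% q ^ n)%N -> (l' : nat) = (l %% q ^ n)%N ->
  uhf_step M k l = ((k %/ q ^ n == l %/ q ^ n)%N)%:R * M k' l'.
Proof.
move=> ek el; rewrite /uhf_step castmxE !mxE /=.
congr (_ * _); congr (M _ _); apply: val_inj => /=; [exact: esym ek | exact: esym el].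
Qed.

Lemma qn_gt0 n : (0 < q ^ n)%N.
Proof. by rewrite expn_gt0 q_gt0. Qed.

Lemma div_step n c r : (r < q ^ n)%N -> ((c * q ^ n + r) %/ q ^ n = c)%N /\ ((c * q ^ n + r) %% q ^ n = r)%N.
Proof.
move=> rq; rewrite divnMDl ?qn_gt0 // modnMDl divn_small // modn_small //.
by rewrite addn0.
Qed.

Lemma Xg_step n i w : (1 <= i <= p)%N -> uhf_step (Xg n i w) = Xg n.+1 i (wup n w).
Proof.
move=> hi; apply/matrixP => k l.
have N0 := qn_gt0 n.
pose k' := Ordinal (ltn_pmod k N0); pose l' := Ordinal (ltn_pmod l N0).
rewrite (@uhf_stepE n _ k l k' l') //.
have ck : (k %/ q ^ n < q)%N by rewrite ltn_divLR // -expnS ltn_ord.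
have key1 : ((k %/ q ^ n == l %/ q ^ n)%N%:R * Xg n i w k' l') != 0 ->
    ((k %/ q ^ n == l %/ q ^ n)%N%:R * Xg n i w k' l') = Xg n.+1 i (wup n w) k l.
  move=> H; have ekl : (k %/ q ^ n)%N = (l %/ q ^ n)%N.
    apply/eqP; apply: contraNT H => /negbTE ->; by rewrite /= ?mulr0n mul0r.
  move: H; rewrite ekl eqxx /= ?mulr1n mul1r => H; have [j jL [e1 e2]] := Xg_nz H.
  have hk : (k : nat) = posk n.+1 i (q * j + k %/ q ^ n).
    by rewrite posk_step // -e1 /=; exact: divn_eq.
  have hl : (l : nat) = posk n.+1 1 (q * j + k %/ q ^ n).
    by rewrite posk_step // -e2 /= ekl; exact: divn_eq.
  have hx0 : (q * j + k %/ q ^ n < q * LL n)%N.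
    apply: (@leq_trans (q * j.+1)); first by rewrite mulnS addnC ltn_add2r.
    by rewrite leq_mul2l jL orbT.
  have hx : (q * j + k %/ q ^ n < LL n.+1)%N by apply: leq_trans hx0 (LL_mono n).
  rewrite (Xg_at _ hi hx hk hl) /wup hx0 (Xg_at _ hi jL e1 e2).
  by rewrite [(q * j)%N]mulnC divnMDl ?q_gt0 // divn_small // addn0.
have key2 : Xg n.+1 i (wup n w) k l != 0 ->
    ((k %/ q ^ n == l %/ q ^ n)%N%:R * Xg n i w k' l') = Xg n.+1 i (wup n w) k l.
  move=> H; have [x xL [e1 e2]] := Xg_nz H.
  rewrite (Xg_at _ hi xL e1 e2) in H *.
  move: H; rewrite /wup; case: ifP => [hx _|]; last by rewrite eqxx.
  have jL : (x %/ q < LL n)%N by rewrite ltn_divLR ?q_gt0 // mulnC.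
  have cq : (x %% q < q)%N by rewrite ltn_mod q_gt0.
  have ex : x = (q * (x %/ q) + x %% q)%N by rewrite mulnC -divn_eq.
  rewrite ex (posk_step _ jL cq) (posk_step _ jL cq) in e1 e2.
  have [d1 m1] := div_step (x %% q) (posk_lt n i (x %/ q)).
  have [d2 m2] := div_step (x %% q) (posk_lt n 1 (x %/ q)).
  rewrite e1 e2 d1 d2 eqxx mul1r.
  apply: (Xg_at _ hi jL); by rewrite /= ?e1 ?e2 ?m1 ?m2.
have [L0|Lnz] := eqVneq ((k %/ q ^ n == l %/ q ^ n)%N%:R * Xg n i w k' l') 0; last exact: key1 Lnz.
have [R0|Rnz] := eqVneq (Xg n.+1 i (wup n w) k l) 0; last exact: key2 Rnz.
by rewrite L0 R0.
Qed.

Fixpoint wemb n k (w : nat -> C) : nat -> C :=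
  match k with 0 => w | k'.+1 => wup (k' + n) (wemb n k' w) end.

Lemma Xg_emb n k i w : (1 <= i <= p)%N ->
  uhf_emb k (Xg n i w) = Xg (k + n) i (wemb n k w).
Proof.
move=> hi; elim: k => [|k IH] //=.
by rewrite IH Xg_step.
Qed.

Lemma wemb_eq n k w x : (x < LL (k + n))%N -> wemb n k w x =
  if (x < q ^ k * LL n)%N then w (x %/ q ^ k)%N else 0.
Proof.
elim: k x => [|k IH] x /=; first by rewrite expn0 mul1n divn1 => ->.
move=> _; rewrite /wup.
have q0 := q_gt0.
case: ifP => hx.
  have hx' : (x %/ q < LL (k + n))%N by rewrite ltn_divLR // mulnC.
  rewrite IH // ltn_divLR // -divnMA -expnS.
  by rewrite mulnC mulnA -expnS.
case: ifP => // hx2; exfalso; move: hx => /negbT; rewrite -leqNgt => hx.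
have := LL_mono_k n k; rewrite -(leq_pmul2l q0) => h.
have := leq_ltn_trans (leq_trans h hx) hx2.
by rewrite expnS mulnA ltnn.
Qed.


Definition wt n j : C := (Num.sqrt (1 - j%:R / (LL n)%:R))%:C.

Lemma normC2 (a : R) : `|a%:C| ^+ 2 = (a ^+ 2)%:C.
Proof. by rewrite normcR -rmorphXn /= real_normK // num_real. Qed.

Lemma sqrt_diff (a b : R) : 0 <= a -> 0 <= b ->
  (Num.sqrt a - Num.sqrt b) ^+ 2 <= `|a - b|.
Proof.
move=> ha hb; rewrite -{2}(sqr_sqrtr ha) -{2}(sqr_sqrtr hb).
have hs := sqrtr_ge0 a; have ht := sqrtr_ge0 b.
move: (Num.sqrt a) (Num.sqrt b) hs ht => s t hs ht.
case: (lerP t s) => h.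
  rewrite ger0_norm; last by rewrite subr_ge0 ler_pXn2r // nnegrE.
  nra.
rewrite ler0_norm; last by rewrite subr_le0 ler_pXn2r // ?nnegrE ltW.
nra.
Qed.

Lemma frac_bound (X J L L' : R) : 0 < L -> 0 < L' ->
  X * L <= J * L' + L' -> J * L' <= X * L + L' ->
  `|(1 - J / L) - (1 - X / L')| <= L^-1.
Proof.
move=> hL hL' h1 h2.
have e : (1 - J / L) - (1 - X / L') = (X * L - J * L') / (L * L').
  by field; apply/andP; split; rewrite gt_eqF.
have hp0 : 0 <= (L * L')^-1 by rewrite invr_ge0 mulr_ge0 // ltW.
rewrite e normrM (ger0_norm hp0).
rewrite ler_pdivrMr ?mulr_gt0 // mulrA mulVf ?gt_eqF // mul1r.
rewrite ler_norml; apply/andP; split; lra.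
Qed.

Lemma frac_bound2 (X L L' : R) : 0 < L -> 0 < L' -> X <= L' ->
  (L' - X) * L <= L' -> 0 <= 1 - X / L' <= L^-1.
Proof.
move=> hL hL' h1 h2; apply/andP; split.
  by rewrite subr_ge0 ler_pdivrMr // mul1r.
have e : 1 - X / L' = (L' - X) / L' by field; rewrite gt_eqF.
by rewrite e ler_pdivrMr // mulrC ler_pdivlMr.
Qed.

Lemma LL_upper_k n k : (LL (k + n) < q ^ k * (LL n).+1)%N.
Proof.
have h1 := pLL (k + n); have h2 := LL_upper n.
rewrite -(ltn_pmul2l p_gt0); apply: leq_ltn_trans h1 _.
by rewrite expnD mulnCA ltn_pmul2l // expn_gt0 q_gt0.
Qed.

Lemma hn_aux (L L' x QL Q : nat) : (QL <= x)%N -> (QL <= L')%N -> (L' < QL + Q)%N -> (QL = Q * L)%N ->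
  ((L' - x) * L <= L')%N.
Proof.
move=> h1 h2 h3 e.
apply: (@leq_trans ((L' - QL) * L)); first by rewrite leq_mul2r leq_sub2l ?orbT.
apply: (@leq_trans QL); last exact: h2.
rewrite e leq_mul2r; apply/orP; right.
rewrite -e leq_subLR; lia.
Qed.

Lemma diff_bound n k x : (0 < LL n)%N -> (x < LL (k + n))%N ->
  `|wemb n k (wt n) x - wt (k + n) x| ^+ 2 <= (((LL n)%:R : R)^-1)%:C.
Proof.
move=> L0 xL; rewrite wemb_eq //.
have hA := LL_mono_k n k; have hB := LL_upper_k n k.
have L'0 : (0 < LL (k + n))%N by apply: leq_ltn_trans xL.
have Q0 : (0 < q ^ k)%N by rewrite expn_gt0 q_gt0.
have rL : (0 : R) < (LL n)%:R by rewrite ltr0n.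
have rL' : (0 : R) < (LL (k + n))%:R by rewrite ltr0n.
case: ifP => hx.
  rewrite /wt -rmorphB normC2 lecR.
  set j := (x %/ q ^ k)%N.
  have jL : (j < LL n)%N by rewrite ltn_divLR // mulnC.
  have ex : x = (j * q ^ k + x %% q ^ k)%N by rewrite -divn_eq.
  have cQ : (x %% q ^ k < q ^ k)%N by rewrite ltn_mod.
  apply: le_trans (sqrt_diff _ _) _.
  - by rewrite subr_ge0 ler_pdivrMr // mul1r ler_nat ltnW.
  - by rewrite subr_ge0 ler_pdivrMr // mul1r ler_nat ltnW.
  apply: frac_bound => //.
  - rewrite -!natrM -natrD ler_nat.
    move: ex cQ hA hB jL; set c := (x %% q ^ k)%N; set Q := (q ^ k)%N.
    set L := LL n; set L' := LL (k + n) => ex cQ hA hB jL.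
    rewrite ex mulnDl.
    apply: leq_add; first by rewrite -mulnA leq_mul2l hA orbT.
    by apply: (leq_trans _ hA); rewrite leq_mul2r ltnW ?orbT.
  - rewrite -!natrM -natrD ler_nat.
    move: ex cQ hA hB jL; set c := (x %% q ^ k)%N; set Q := (q ^ k)%N.
    set L := LL n; set L' := LL (k + n) => ex cQ hA hB jL.
    apply: (@leq_trans (j * (Q * L) + j * Q)).
      by rewrite -mulnDr leq_mul2l -mulnSr ltnW ?orbT.
    apply: leq_add.
      by rewrite ex mulnDl mulnA [(j * Q)%N]mulnC leq_addr.
    by apply: (leq_trans _ hA); rewrite mulnC leq_mul2l ltnW ?orbT.
rewrite /wt sub0r normrN normC2 sqr_sqrtr; last first.
  by rewrite subr_ge0 ler_pdivrMr // mul1r ler_nat ltnW.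
rewrite lecR.
move: hx => /negbT; rewrite -leqNgt => hx.
have hn : ((LL (k + n) - x) * LL n <= LL (k + n))%N.
  by apply: (hn_aux hx hA) => //; rewrite -mulnSr.
have hX : (x%:R : R) <= (LL (k + n))%:R by rewrite ler_nat ltnW.
have hn' : ((LL (k + n))%:R - x%:R) * (LL n)%:R <= ((LL (k + n))%:R : R).
  by rewrite -natrB; [rewrite -natrM ler_nat | exact: ltnW].
by have /andP [_ ->] := frac_bound2 rL rL' hX hn'.
Qed.


Definition xs (i : nat) : uhf_seq R q := fun n => Xg n i (wt n).

Lemma LL_mono_le n m : (n <= m)%N -> (LL n <= LL m)%N.
Proof.
move=> nm; have := LL_mono_k n (m - n); rewrite subnK // => h.
by apply: leq_trans h; rewrite leq_pmull // expn_gt0 q_gt0.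
Qed.

Lemma LL_big (M : nat) : exists N, forall n, (N <= n)%N -> (M <= LL n)%N.
Proof.
exists (p * M)%N => n hn; apply: (@leq_trans (LL (p * M))); last exact: LL_mono_le.
rewrite /LL leq_divRL ?p_gt0 // mulnC ltnW //.
exact: ltn_expl.
Qed.

Lemma inv_le_of (L e : R) : 0 < e -> e^-1 <= L -> L^-1 <= e.
Proof.
move=> he hL; have hL0 : 0 < L by apply: lt_le_trans hL; rewrite invr_gt0.
by rewrite -(invrK e) lef_pV2 ?posrE ?invr_gt0.
Qed.

Lemma LL_eps (eps : R) : 0 < eps -> exists N, forall n, (N <= n)%N ->
  (0 < LL n)%N /\ ((LL n)%:R : R)^-1 <= eps.
Proof.
move=> he.
have hei : 0 < eps^-1 by rewrite invr_gt0.
have hb := archi_boundP (ltW hei).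
have [N hN] := LL_big (Num.Def.archi_bound (eps^-1)).+1.
exists N => n /hN h; split; first by apply: leq_trans h.
apply: inv_le_of => //; apply: (le_trans (ltW hb)); rewrite ler_nat.
exact: leq_trans (leqnSn _) h.
Qed.

Lemma xs_cauchy i : (1 <= i <= p)%N -> uhf_cauchy (xs i).
Proof.
move=> hi eps he.
have [N hN] := LL_eps (mulr_gt0 he he).
exists N => n k /hN [L0 hL].
rewrite /xs Xg_emb // Xg_sub; apply: opnorm_Xg => // j jL.
apply: le_trans (@diff_bound n k j L0 jL) _.
by rewrite lecR expr2.
Qed.

Lemma xs_norm i : (1 <= i <= p)%N -> uhf_norm_le (xs i) 1.
Proof.
move=> hi eps he; exists 0%N => n _; apply: opnorm_Xg => // j jL.
have hL : (0 : R) < (LL n)%:R by rewrite ltr0n; apply: leq_ltn_trans jL.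
rewrite /wt normC2 sqr_sqrtr; last by rewrite subr_ge0 ler_pdivrMr // mul1r ler_nat ltnW.
rewrite lecR; apply: (@le_trans _ _ 1).
  by rewrite lerBlDr lerDl divr_ge0 // ltW.
rewrite expr2; nra.
Qed.

Lemma opnorm_le0 m (eps : R) : 0 < eps -> opnorm_le (0 : 'M[C]_m) eps.
Proof.
move=> he v; rewrite mul0mx /vnorm2 big1 => [|k _]; last by rewrite mxE normr0 expr0n.
by rewrite mulr_ge0 // ?ler0c ?sqr_ge0 // sumr_ge0 // => k _; rewrite sqr_norm_ge0.
Qed.

Lemma xs_mul0 i j : (2 <= i <= p)%N -> (2 <= j <= p)%N -> uhf_null (uhf_mul (xs i) (xs j)).
Proof.
move=> hi hj eps he; exists 0%N => n _.
by rewrite /uhf_mul /xs Xg_mul0 ?one_i2 //; apply: opnorm_le0.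
Qed.

Lemma xs_adj i j : (2 <= i <= p)%N -> (2 <= j <= p)%N ->
  uhf_null (uhf_sub (uhf_mul (uhf_adj (xs i)) (xs j))
                    (uhf_scale (i == j)%:R (uhf_mul (uhf_adj (xs 2)) (xs 2)))).
Proof.
move=> hi hj eps he; exists 0%N => n _.
have h2 : (1 <= 2 <= p)%N by rewrite hp.
rewrite /uhf_sub /uhf_mul /uhf_adj /uhf_scale /xs !Xg_adj_mul ?one_i2 //.
by rewrite eqxx scale1r subrr; apply: opnorm_le0.
Qed.


Lemma Dg_wt n : Dg n (wt n) = diag_mx (\row_(k < q ^ n)
   (\sum_(a < LL n) (if (k : nat) == posk n 1 a then 1 - (a : nat)%:R / (LL n)%:R else 0))%:C).
Proof.
apply/matrixP => k l; rewrite !mxE rmorph_sum mulr_natl; congr (_ *+ _).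
apply: eq_bigr => a _; case: ifP => _; last by rewrite rmorph0.
rewrite /wt conjc_real -rmorphM -expr2 sqr_sqrtr // subr_ge0.
have hL : (0 : R) < (LL n)%:R by rewrite ltr0n; apply: leq_ltn_trans (ltn_ord a).
by rewrite ler_pdivrMr // mul1r ler_nat ltnW.
Qed.

Lemma mxpow_diag m (d : 'rV[C]_m) i : mxpow (diag_mx d) i = diag_mx (\row_k (d 0 k ^+ i)).
Proof.
elim: i => [|i IH].
  by apply/matrixP => a b; rewrite /mxpow /= !mxE expr0.
rewrite /mxpow /= -/(mxpow _ i) IH mulmx_diag; congr diag_mx.
by apply/rowP => k; rewrite !mxE exprS.
Qed.

Lemma poly_mx_diag (P : {poly R}) m (r : 'I_m -> R) :
  poly_mx P (diag_mx (\row_k (r k)%:C)) = diag_mx (\row_k (P.[r k])%:C).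
Proof.
rewrite /poly_mx; under eq_bigr do rewrite mxpow_diag.
apply/matrixP => k l; rewrite summxE !mxE.
under eq_bigr do rewrite !mxE.
case: (eqVneq k l) => [_|nkl] /=.
  rewrite mulr1n horner_coef rmorph_sum; apply: eq_bigr => i _.
  by rewrite mulr1n rmorphM rmorphXn.
by rewrite mulr0n big1 // => i _; rewrite mulr0n mulr0.
Qed.

Lemma trace_formula n (P : {poly R}) : P.[0] = 0 ->
  ntr (poly_mx P (uhf_mul (uhf_adj (xs 2)) (xs 2) n)) =
  ((\sum_(a < LL n) P.[1 - (a : nat)%:R / (LL n)%:R]) / (q ^ n)%:R)%:C.
Proof.
move=> P0.
have h2 : (1 <= 2 <= p)%N by rewrite hp.
rewrite /uhf_mul /uhf_adj /xs Xg_adj_mul // eqxx scale1r Dg_wt poly_mx_diag /ntr mxtrace_diag.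
rewrite rmorphM fmorphV /= rmorph_nat rmorph_sum; congr (_ / _).
under eq_bigr do rewrite mxE.
rewrite -!rmorph_sum; f_equal.
set F := fun a : 'I_(LL n) => P.[1 - (a : nat)%:R / (LL n)%:R].
have e1 : forall k : 'I_(q ^ n),
    P.[\sum_(a < LL n) (if (k : nat) == posk n 1 a then 1 - (a : nat)%:R / (LL n)%:R else 0)]
    = \sum_(a < LL n) (if (k : nat) == posk n 1 a then F a else 0).
  move=> k; case: (pselect (exists a : 'I_(LL n), (k : nat) == posk n 1 a)) => [[a /eqP ha]|hn].
    have uq : forall b : 'I_(LL n), (k : nat) == posk n 1 b -> b = a.
      move=> b /eqP hb; apply: val_inj.
      by have [] := posk_inj one_ip one_ip (ltn_ord b) (ltn_ord a) (etrans (esym hb) ha).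
    rewrite (sum_unique (m0 := a)); last by move=> b; case: ifP => [/uq|]; last by rewrite eqxx.
    rewrite (sum_unique (m0 := a)); last by move=> b; case: ifP => [/uq|]; last by rewrite eqxx.
    by rewrite ha eqxx.
  have h0 : forall a : 'I_(LL n), ((k : nat) == posk n 1 a) = false.
    by move=> a; apply/negbTE; apply/negP => h; apply: hn; exists a.
  rewrite big1; last by move=> a _; rewrite h0.
  by rewrite big1 // => a _; rewrite h0.
under eq_bigr do rewrite e1.
rewrite exchange_big /=; apply: eq_bigr => a _.
rewrite (sum_unique (m0 := Ordinal (posk_lt n 1 a))) /= ?eqxx //.
move=> k; case: ifP => [/eqP hk _|]; last by rewrite eqxx.
by apply: val_inj.
Qed.


Lemma combine (Sg I L N P B e : R) : 0 < L -> 0 < N -> 1 <= P -> P * L <= N ->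
  N <= P * L + P -> `|Sg| <= L * B -> `|Sg / L - I| <= e / 2 -> 2 * B / e <= N ->
  0 < e -> `|Sg / N - P^-1 * I| <= e.
Proof.
move=> hL hN hP h1 h2 hS hR hB he.
have P0 : 0 < P by apply: lt_le_trans hP.
have eq : Sg / N - P^-1 * I = (Sg / L - I) / P + Sg * ((P * L - N) / (N * P * L)).
  by field; rewrite !gt_eqF.
rewrite eq; apply: le_trans (ler_normD _ _) _.
have t1 : `|(Sg / L - I) / P| <= e / 2.
  have hPi : 0 <= P^-1 by rewrite invr_ge0 ltW.
  rewrite normrM (ger0_norm hPi).
  apply: (le_trans _ hR); rewrite ler_pdivrMr // ler_peMr //.
have t2 : `|Sg * ((P * L - N) / (N * P * L))| <= e / 2.
  have hd : 0 < N * P * L by rewrite !mulr_gt0.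
  have hdi : 0 <= (N * P * L)^-1 by rewrite invr_ge0 ltW.
  rewrite normrM normrM (ger0_norm hdi).
  have hPL : `|P * L - N| <= P by rewrite distrC ger0_norm ?subr_ge0 //; lra.
  apply: (@le_trans _ _ ((L * B) * (P * (N * P * L)^-1))).
    apply: ler_pM => //; first by rewrite mulr_ge0.
    by rewrite ler_wpM2r.
  have B0 : 0 <= B by have := le_trans (normr_ge0 Sg) hS; rewrite pmulr_rge0.
  have -> : (L * B) * (P * (N * P * L)^-1) = B / N by field; rewrite !gt_eqF.
  rewrite ler_pdivrMr // mulrC -ler_pdivrMr ?divr_gt0 //.
  have -> : B / (e / 2) = 2 * B / e by field; rewrite gt_eqF.
  exact: hB.
lra.
Qed.

Local Open Scope classical_set_scope.
Lemma S_conv (f : R -> R) : {within `[0, 1]%classic, continuous f} -> approx f ->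
  forall e : R, 0 < e -> exists N, forall n, (N <= n)%N ->
  `|(\sum_(a < LL n) f (1 - (a : nat)%:R / (LL n)%:R)) / (q ^ n)%:R
     - (p%:R)^-1 * \int[@lebesgue_measure R]_(t in `[0, 1]%classic) f t| <= e.
Proof.
move=> hf ha e he.
have [B hB] := approx_bnd ha.
have he2 : 0 < e / 2 by rewrite divr_gt0.
have [L0 hR] := riemann hf ha he2.
have hx : 0 <= 2 * `|B| / e by apply: divr_ge0; [apply: mulr_ge0 | apply: ltW].
have hbd := archi_boundP hx.
have [N hN] := LL_big (maxn L0 (Num.Def.archi_bound (2 * `|B| / e))).+1.
exists N => n /hN; rewrite gtn_max => /andP [h1 h2].
have L0' : (0 < LL n)%N by apply: leq_ltn_trans h1.
have rL : (0 : R) < (LL n)%:R by rewrite ltr0n.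
apply: (@combine _ _ (LL n)%:R _ _ `|B|) => //.
- by rewrite ltr0n expn_gt0 q_gt0.
- by rewrite ler1n ltnW.
- by rewrite -natrM ler_nat pLL.
- by rewrite -natrM -natrD ler_nat -mulnSr ltnW // LL_upper.
- apply: le_trans (ler_norm_sum _ _ _) _.
  apply: (@le_trans _ _ (\sum_(a < LL n) `|B|)); last by rewrite sumr_const card_ord mulr_natl.
  apply: ler_sum => a _; apply: le_trans (hB _ _) (ler_norm _).
  apply/andP; split; first by rewrite subr_ge0 ler_pdivrMr // mul1r ler_nat ltnW.
  by rewrite lerBlDr lerDl divr_ge0 // ltW.
- exact: hR (ltnW h1) L0'.
- apply: le_trans (ltW hbd) _; rewrite ler_nat.
  apply: leq_trans (ltnW h2) _; apply: leq_trans (pLL n); exact: leq_pmull p_gt0.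
Qed.

Lemma main_tau (f : R -> R) : {within `[0, 1]%classic, continuous f} ->
  tau_fcalc_is f (uhf_mul (uhf_adj (xs 2)) (xs 2))
    (((p%:R)^-1 * \int[@lebesgue_measure R]_(t in `[0, 1]%classic) f t)%:C).
Proof.
move=> hf P P0 hPf eps he.
have ha : approx f.
  move=> e0 he0; have [K hK] := hPf _ he0.
  by exists (P K) => t ht; apply: hK.
have he2 : 0 < eps / 2 by rewrite divr_gt0.
have [K hK] := hPf _ he2.
exists K => k hk.
have [N hN] := S_conv hf ha he2.
exists N => n hn.
rewrite trace_formula // -rmorphB normcR lecR.
set I := (p%:R)^-1 * _.
have hq0 : (0 : R) < (q ^ n)%:R by rewrite ltr0n expn_gt0 q_gt0.
have hd : `|(\sum_(a < LL n) (P k).[1 - (a : nat)%:R / (LL n)%:R]) / (q ^ n)%:R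
   - (\sum_(a < LL n) f (1 - (a : nat)%:R / (LL n)%:R)) / (q ^ n)%:R| <= eps / 2.
  have hqi : 0 <= ((q ^ n)%:R : R)^-1 by rewrite invr_ge0 ltW.
  rewrite -mulrBl -sumrB normrM (ger0_norm hqi).
  rewrite ler_pdivrMr //.
  apply: le_trans (ler_norm_sum _ _ _) _.
  apply: (@le_trans _ _ (\sum_(a < LL n) (eps / 2))).
    apply: ler_sum => a _; rewrite distrC; apply: hK => //.
    have rL : (0 : R) < (LL n)%:R by rewrite ltr0n; apply: leq_ltn_trans (ltn_ord a).
    apply/andP; split; first by rewrite subr_ge0 ler_pdivrMr // mul1r ler_nat ltnW.
    by rewrite lerBlDr lerDl divr_ge0 // ltW.
  rewrite sumr_const card_ord -[X in X <= _]mulr_natr; apply: ler_wpM2l; [exact: ltW | rewrite ler_nat].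
  apply: leq_trans (pLL n); exact: leq_pmull p_gt0.
have := hN n hn; move: hd.
set A := _ / (q ^ n)%:R; set Bq := _ / (q ^ n)%:R.
move=> h1 h2.
have e : A - I = (A - Bq) + (Bq - I) by ring.
rewrite e; apply: le_trans (ler_normD _ _) _; lra.
Qed.

End Comb.

Local Open Scope ring_scope.
Local Open Scope complex_scope.
Local Open Scope classical_set_scope.

Theorem lemma4p4 (R : realType) (p q : nat) (hp : (2 <= p)%N) (hq : (2 <= q)%N) :
  exists x : nat -> uhf_seq R q,
    (forall i : nat, (2 <= i <= p)%N -> uhf_cauchy (x i)) /\
    (forall i : nat, (2 <= i <= p)%N -> uhf_norm_le (x i) 1) /\
    (forall i j : nat, (2 <= i <= p)%N -> (2 <= j <= p)%N -> i != j ->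
       uhf_null (uhf_mul (x i) (x j))) /\
    (forall i j : nat, (2 <= i <= p)%N -> (2 <= j <= p)%N ->
       uhf_null (uhf_sub (uhf_mul (uhf_adj (x i)) (x j))
                         (uhf_scale (i == j)%:R (uhf_mul (uhf_adj (x 2%N)) (x 2%N))))) /\
    (forall f : R -> R,
       {within `[0, 1]%classic, continuous f} -> f 0 = 0 ->
       tau_fcalc_is f (uhf_mul (uhf_adj (x 2%N)) (x 2%N))
         (((p%:R)^-1 * \int[@lebesgue_measure R]_(t in `[0, 1]%classic) f t)%:C)).
Proof.
exists (fun i => xs q p R i).
split; first by move=> i hi; apply: (xs_cauchy hq hp); exact: one_i2.
split; first by move=> i hi; apply: (xs_norm hq hp); exact: one_i2.
split; first by move=> i j hi hj _; exact: (xs_mul0 hq hp).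
split; first by move=> i j hi hj; exact: (xs_adj hq hp).
by move=> f hf _; exact: (main_tau hq hp).
Qed.
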